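(* Let $T_1=(V_1,E_1)$ and $T_2=(V_2,E_2)$ be trees with $|V_1|=|V_2|=n$. Suppose there exist labelings $\mathcal{L}_1,\mathcal{L}_2$ and edge orderings $\pi_1,\pi_2$ of $T_1,T_2$ respectively, and an element $\sigma\in S_n$, such that $$\sigma\,\mathcal{K}_{\mathcal{L}_1,\pi_1}(T_1)\,\sigma^{-1}=\mathcal{K}_{\mathcal{L}_2,\pi_2}(T_2).$$ Then $T_1$ and $T_2$ are isomorphic.
   Context: $\mathbb{C}[S_n]$ is the group algebra of the symmetric group $S_n$. A labeling of a graph $G=(V,E)$ with $|V|=n$ is a bijection $\mathcal{L}:V\to\{1,\dots,n\}$; under it an edge $\{u,v\}$ corresponds to the transposition $(\mathcal{L}(u)\,\mathcal{L}(v))\in S_n$. For a labeling $\mathcal{L}$ and an ordering $\pi=(e_1,\dots,e_m)$ of $E$, $\mathcal{K}_{\mathcal{L},\pi}(G)=n!\,(1-t_1)(1-t_2)\cdots(1-t_m)\in\mathbb{C}[S_n]$, where $t_r$ is the transposition corresponding to $e_r$ under $\mathcal{L}$ and the product is in the order of $\pi$. *)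

(* Defs.v *)
From mathcomp Require Import all_boot all_order all_algebra all_fingroup all_field.
Set Implicit Arguments. Unset Strict Implicit. Unset Printing Implicit Defensive.
Import GRing.Theory.
Local Open Scope ring_scope.

Definition simple_graph (V : finType) (e : rel V) : Prop :=
  symmetric e /\ irreflexive e.

Definition connected_graph (V : finType) (e : rel V) : Prop :=
  forall x y : V, connect e x y.

Definition acyclic_graph (V : finType) (e : rel V) : Prop :=
  forall c : seq V, ucycle e c -> (size c < 3)%N.

Definition is_tree (V : finType) (e : rel V) : Prop :=
  [/\ simple_graph e, connected_graph e & acyclic_graph e].

Definition edge_set (V : finType) (e : rel V) : {set {set V}} :=
  [set E : {set V} | [exists u, exists v, e u v && (E == [set u; v])]].

(* an ordering of the edges: a list of (oriented) edges listing every
   edge of the graph exactly once *)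
Definition edge_ordering (V : finType) (e : rel V) (pi : seq (V * V)) : Prop :=
  all (fun p => e p.1 p.2) pi /\
  perm_eq [seq [set p.1; p.2] | p <- pi] (enum (edge_set e)).

(* labeling: a bijection V -> {1,...,n} (here 'I_n = {0,...,n-1}) *)
Definition labeling (V : finType) (n : nat) (L : V -> 'I_n) : Prop := bijective L.

Definition graph_iso (V1 V2 : finType) (e1 : rel V1) (e2 : rel V2) : Prop :=
  exists f : V1 -> V2, bijective f /\ forall x y, e2 (f x) (f y) = e1 x y.

Definition galg (n : nat) := {ffun 'S_n -> algC}.

Definition gmul n (a b : galg n) : galg n :=
  [ffun g : 'S_n => \sum_(h : 'S_n) a h * b (h^-1 * g)%g].

Definition gdelta n (g : 'S_n) : galg n := [ffun h : 'S_n => (h == g)%:R].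

Definition gone n : galg n := gdelta 1%g.

Definition one_minus n (t : 'S_n) : galg n := [ffun h => gone n h - gdelta t h].

Definition gscale n (c : algC) (a : galg n) : galg n := [ffun h => c * a h].

(* K_{L,pi}(G) = n! (1 - t_1)(1 - t_2)...(1 - t_m) *)
Definition Kelem (V : finType) (n : nat) (L : V -> 'I_n) (pi : seq (V * V)) : galg n :=
  gscale (n`!)%:R
    (foldr (fun p acc => gmul (one_minus (tperm (L p.1) (L p.2))) acc) (gone n) pi).

(* Main.v *)
Require Import Defs.
From mathcomp Require Import all_boot all_order all_algebra all_fingroup all_field.
From mathcomp Require Import zify ring.
Import GRing.Theory Num.Theory.
Set Implicit Arguments. Unset Strict Implicit. Unset Printing Implicit Defensive.

Section Forest.
Variable T : finType.
Local Open Scope group_scope.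

Definition prodt (s : seq (T * T)) : {perm T} :=
  foldr (fun p acc => tperm p.1 p.2 * acc) 1 s.

Definition es (s : seq (T * T)) := [seq [set p.1; p.2] | p <- s].
Definition rs (s : seq (T * T)) : rel T := fun a b => [set a; b] \in es s.

Lemma set2_eq (a b c d : T) : [set a; b] = [set c; d] ->
  (a = c /\ b = d) \/ (a = d /\ b = c).
Proof.
move=> E.
have ha : a \in [set c; d] by rewrite -E !inE eqxx.
have hb : b \in [set c; d] by rewrite -E !inE eqxx orbT.
have hc : c \in [set a; b] by rewrite E !inE eqxx.
have hd : d \in [set a; b] by rewrite E !inE eqxx orbT.
move: ha hb hc hd; rewrite !inE => /orP[/eqP ha|/eqP ha] /orP[/eqP hb|/eqP hb]
  /orP[/eqP hc|/eqP hc] /orP[/eqP hd|/eqP hd]; subst; auto.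
Qed.

Lemma porbit1 (x : T) : porbit 1 x = [set x].
Proof. by rewrite porbit.unlock cycle1 imset_set1 /aperm perm1. Qed.

Lemma card_porbits1 : #|porbits (1 : {perm T})| = #|T|.
Proof.
rewrite /porbits (eq_imset _ porbit1) card_imset //; exact: set1_inj.
Qed.

Lemma card_porbits_tperm (a b : T) : a != b -> #|porbits (tperm a b)| + 1 = #|T|.
Proof.
move=> ab; have := porbits_mul_tperm 1 a b.
rewrite /= mulg1 card_porbits1 porbit1 inE ab /=; lia.
Qed.

Lemma rs_cons p s : subrel (rs s) (rs (p :: s)).
Proof. by move=> a b; rewrite /rs /= inE => ->; rewrite orbT. Qed.

Lemma connect_prodt s z : connect (rs s) z (prodt s z).
Proof.
elim: s z => [|p s IH] z /=; first by rewrite perm1 connect0.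
rewrite permM; apply: (@connect_trans _ _ (tperm p.1 p.2 z)).
  case: tpermP => [->|->|_ _]; rewrite ?connect0 //; apply: connect1;
  by rewrite /rs /= inE ?eqxx // setUC eqxx.
apply: connect_sub (IH _) => a b h; apply: connect1; exact: rs_cons.
Qed.

Lemma porbit_connect s x y : y \in porbit (prodt s) x -> connect (rs s) x y.
Proof.
case/porbitP=> i ->{y}; elim: i => [|i IH]; first by rewrite expg0 perm1 connect0.
by rewrite expgSr permM; apply: connect_trans IH (connect_prodt _ _).
Qed.

Variable r : rel T.
Hypothesis rsym : symmetric r.
Hypothesis rirr : irreflexive r.
Hypothesis racyc : forall c : seq T, ucycle r c -> (size c < 3)%N.

Definition forest s := all (fun p => r p.1 p.2) s && uniq (es s).

Lemma rs_r s : all (fun p => r p.1 p.2) s -> subrel (rs s) r.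
Proof.
move=> /allP A a b /mapP[p /A rp /set2_eq [[-> ->]|[-> ->]]] //.
by rewrite rsym.
Qed.

Lemma forest_cons p s : forest (p :: s) = [&& r p.1 p.2, [set p.1; p.2] \notin es s & forest s].
Proof. by rewrite /forest /=; case: (r p.1 p.2); case: (all _ s); case: ([set p.1; p.2] \in es s). Qed.

Lemma forest_porbits s : forest s -> #|porbits (prodt s)| + size s = #|T|.
Proof.
elim: s => [|p s IH] /=; first by rewrite card_porbits1 addn0.
rewrite forest_cons => /and3P[rp nin fs].
have := porbits_mul_tperm (prodt s) p.1 p.2.
have -> : p.1 != p.2 by apply/eqP => E; move: rp; rewrite E rirr.
suff -> : p.1 \notin porbit (prodt s) p.2.
  by have := IH fs; rewrite /= => H1 H2; lia.
apply/negP => /porbit_connect /connectP [q pq lq].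
have A : all (fun p => r p.1 p.2) s by case/andP: fs.
move: lq; case: (shortenP pq) => q' pq' uq _ lq'.
have /racyc : ucycle r (p.2 :: q').
  apply/andP; split=> //; rewrite /= rcons_path -lq' rp andbT.
  by apply: (sub_path _ pq') => a b /(rs_r A).
case: q' pq' uq lq' => [|z [|w q']] /=.
- by move=> _ _ E; move: rp; rewrite E rirr.
- by rewrite andbT => h _ E; move: nin; rewrite /rs -E setUC in h; rewrite h.
- by [].
Qed.

Lemma forest_mask m s : forest s -> forest (mask m s).
Proof.
case/andP=> A U; apply/andP; split; first exact: all_mask.
by rewrite /es map_mask mask_uniq.
Qed.

End Forest.

Lemma tperm_set (T : finType) (a b c d : T) :
  [set a; b] = [set c; d] -> tperm a b = tperm c d.
Proof. by case/set2_eq=> [[-> ->]|[-> ->]]; rewrite // tpermC. Qed.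

Lemma set_tperm (T : finType) (a b c d : T) : a != b ->
  tperm a b = tperm c d -> [set a; b] = [set c; d].
Proof.
move=> ab E.
have hin x : x \in [set a; b] -> x \in [set c; d].
  move=> hx; rewrite !inE; case: (eqVneq x c) => //= xc; case: (eqVneq x d) => //= xd.
  rewrite eq_sym in xc; rewrite eq_sym in xd; have := tpermD xc xd; rewrite -E.
  by move: hx; rewrite !inE => /orP[]/eqP->; rewrite ?tpermL ?tpermR => /eqP;
     rewrite ?(negbTE ab) // eq_sym (negbTE ab).
have := hin a; have := hin b; rewrite !inE !eqxx orbT /= => /(_ isT) hb /(_ isT) ha.
move: ha hb ab => /orP[]/eqP-> /orP[]/eqP->; rewrite ?eqxx // => _.
by rewrite setUC.
Qed.

Section Alg.
Variable n : nat.
Local Open Scope ring_scope.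

Definition F (s : seq ('I_n * 'I_n)) : galg n :=
  foldr (fun p acc => gmul (one_minus (tperm p.1 p.2)) acc) (gone n) s.

Lemma gmul_deltal (t : 'S_n) (a : galg n) g : gmul (gdelta t) a g = a (t^-1 * g)%g.
Proof.
rewrite ffunE (bigD1 t) //= ffunE eqxx mul1r big1 ?addr0 // => h ht.
by rewrite ffunE (negbTE ht) mul0r.
Qed.

Lemma gmul_deltar (a : galg n) (u : 'S_n) g : gmul a (gdelta u) g = a (g * u^-1)%g.
Proof.
rewrite ffunE (bigD1 (g * u^-1)%g) //= ffunE invMg invgK mulgKV eqxx mulr1.
rewrite big1 ?addr0 // => h hne; rewrite ffunE.
case: eqP => [E|]; last by rewrite mulr0.
by move: hne; rewrite -E invMg invgK mulgA mulgV mul1g eqxx.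
Qed.

Lemma gmul_om (t : 'S_n) (a : galg n) g : gmul (one_minus t) a g = a g - a (t^-1 * g)%g.
Proof.
rewrite -gmul_deltal ffunE.
under eq_bigr do rewrite ffunE mulrBl.
rewrite sumrB ffunE; congr (_ - _).
rewrite (bigD1 1%g) //= ffunE eqxx mul1r invg1 mul1g big1 ?addr0 // => h ht.
by rewrite ffunE (negbTE ht) mul0r.
Qed.

Lemma F_cons p s g : F (p :: s) g = F s g - F s (tperm p.1 p.2 * g)%g.
Proof. by rewrite /= gmul_om tpermV. Qed.

Lemma F_support s g : F s g != 0 -> exists m, g = prodt (mask m s).
Proof.
elim: s g => [|p s IH] g /=.
  by rewrite /gone ffunE; case: (g =P 1%g) => [-> _|]; [exists [::] | rewrite eqxx].
rewrite gmul_om tpermV.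
case: (F s g =P 0) => [->|/eqP/IH [m ->]]; last by exists (false :: m).
rewrite sub0r oppr_eq0 => /IH [m Em]; exists (true :: m) => /=.
by rewrite -Em tpermKg.
Qed.

Variable r : rel 'I_n.
Hypothesis rsym : symmetric r.
Hypothesis rirr : irreflexive r.
Hypothesis racyc : forall c : seq 'I_n, ucycle r c -> (size c < 3)%N.

Lemma F_trans s a b : forest r s -> a != b -> F s (tperm a b) != 0 ->
  [set a; b] \in es s.
Proof.
move=> fs ab /F_support [m E].
have := forest_porbits rsym rirr racyc (forest_mask m fs).
have := card_porbits_tperm ab; rewrite E => H1 H2.
have : size (mask m s) = 1%N by apply/eqP; rewrite -(eqn_add2l #|porbits (prodt (mask m s))|) H2 H1.
case Em: (mask m s) => [|p [|]] //= _.
have ps : p \in s by apply: (@mem_mask _ _ m); rewrite Em mem_head.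
move: E; rewrite Em /= mulg1 => /(set_tperm ab) ->.
exact: map_f.
Qed.

Lemma F1 s : forest r s -> F s 1%g = 1.
Proof.
elim: s => [|p s IH]; first by rewrite /= ffunE eqxx.
rewrite forest_cons => /and3P[rp nin fs].
rewrite F_cons mulg1 IH //.
have pab : p.1 != p.2 by apply/eqP => E; move: rp; rewrite E rirr.
case: (F s (tperm p.1 p.2) =P 0) => [->|/eqP]; first by rewrite subr0.
by move/(F_trans fs pab); rewrite (negbTE nin).
Qed.

Lemma F_edge s a b : forest r s -> a != b -> [set a; b] \in es s ->
  F s (tperm a b) = -1.
Proof.
elim: s => [|p s IH] //.
move=> fps ab; move: (fps); rewrite forest_cons => /and3P[rp nin fs].
have pab : p.1 != p.2 by apply/eqP => E; move: rp; rewrite E rirr.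
rewrite F_cons inE.
case: (eqVneq [set a; b] [set p.1; p.2]) => [E _|NE /= hin].
  rewrite (tperm_set E) tperm2 F1 //.
  case: (F s (tperm p.1 p.2) =P 0) => [->|/eqP]; first by rewrite sub0r.
  by move/(F_trans fs pab); rewrite (negbTE nin).
rewrite IH //.
case: (F s (tperm p.1 p.2 * tperm a b)%g =P 0) => [->|/eqP]; first by rewrite subr0.
move/F_support=> [m E].
have E' : tperm a b = prodt (mask (true :: m) (p :: s)) by rewrite /= -E tpermKg.
have := forest_porbits rsym rirr racyc (forest_mask (true :: m) fps).
have := card_porbits_tperm ab; rewrite E' => H1 H2.
have : size (mask (true :: m) (p :: s)) = 1%N by apply/eqP; rewrite -(eqn_add2l #|porbits (prodt (mask (true :: m) (p :: s)))|) H2 H1.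
move=> /= [].
case Em: (mask m s) => // _.
move: E'; rewrite /= Em mulg1 => /(set_tperm ab) E2.
by move: NE; rewrite E2 eqxx.
Qed.

End Alg.

Section Tree.
Variables (n : nat) (V : finType) (e : rel V) (L : V -> 'I_n) (Li : 'I_n -> V).
Hypothesis LK : cancel L Li.
Hypothesis LiK : cancel Li L.
Hypothesis T : is_tree e.
Variable pi : seq (V * V).
Hypothesis hpi : edge_ordering e pi.

Definition rl : rel 'I_n := fun a b => e (Li a) (Li b).
Definition sl := [seq (L p.1, L p.2) | p <- pi].

Lemma esym : symmetric e. Proof. by case: T => [[]]. Qed.
Lemma eirr : irreflexive e. Proof. by case: T => [[]]. Qed.

Lemma rl_sym : symmetric rl. Proof. by move=> a b; rewrite /rl esym. Qed.
Lemma rl_irr : irreflexive rl. Proof. by move=> a; rewrite /rl eirr. Qed.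
Lemma rl_acyc : forall c : seq 'I_n, ucycle rl c -> (size c < 3)%N.
Proof.
move=> c /andP[cc uc]; case: T => _ _ /(_ (map Li c)); rewrite size_map; apply.
by rewrite /ucycle cycle_map cc (map_inj_uniq (can_inj LiK)) uc.
Qed.

Lemma es_sl : es sl = [seq L @: A | A : {set V} <- [seq [set p.1; p.2] | p <- pi]].
Proof.
rewrite /es /sl -!map_comp; apply: eq_map => p /=.
by rewrite imsetU1 imset_set1.
Qed.

Lemma forest_sl : forest rl sl.
Proof.
case: hpi => A P; apply/andP; split.
  rewrite all_map; apply: sub_all A => p /=; by rewrite /rl !LK.
rewrite es_sl (map_inj_uniq (imset_inj (can_inj LK))) (perm_uniq P).
exact: enum_uniq.
Qed.

Lemma edge_sl x y : e x y = ([set L x; L y] \in es sl).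
Proof.
case: hpi => A P.
have -> : [set L x; L y] = L @: [set x; y] by rewrite imsetU1 imset_set1.
rewrite es_sl (mem_map (imset_inj (can_inj LK))) (perm_mem P) mem_enum inE.
apply/idP/existsP => [exy|[u /existsP[v /andP[euv /eqP /set2_eq]]]].
  by exists x; apply/existsP; exists y; rewrite exy eqxx.
by case=> [[-> ->]|[-> ->]] //; rewrite esym.
Qed.

End Tree.

Lemma Kelem_F n (V : finType) (L : V -> 'I_n) pi g :
  Kelem L pi g = ((n`!)%:R * F [seq (L p.1, L p.2) | p <- pi] g)%R.
Proof. by rewrite /Kelem ffunE /F foldr_map. Qed.

Lemma K_nz n (V : finType) (e : rel V) (L : V -> 'I_n) Li pi
  (LK : cancel L Li) (LiK : cancel Li L) (T : is_tree e) (hpi : edge_ordering e pi)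
  (x y : V) : x != y ->
  ((Kelem L pi (tperm (L x) (L y)) != 0)%R = e x y).
Proof.
move=> xy.
have ab : L x != L y by rewrite (inj_eq (can_inj LK)).
have fs := forest_sl LK hpi.
have S := rl_sym Li T; have I := rl_irr Li T.
have A : forall c, ucycle (rl e Li) c -> (size c < 3)%N := fun c => @rl_acyc _ _ _ L Li LiK T c.
rewrite Kelem_F mulf_eq0 pnatr_eq0 eqn0Ngt fact_gt0 /= (edge_sl LK T hpi).
apply/idP/idP => [/(F_trans S I A fs ab) //|h].
by rewrite (F_edge S I A fs ab h) oppr_eq0 oner_eq0.
Qed.

Theorem mainTheorem10 (n : nat) (V1 V2 : finType) (e1 : rel V1) (e2 : rel V2)
  (T1 : is_tree e1) (T2 : is_tree e2)
  (card1 : #|V1| = n) (card2 : #|V2| = n)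
  (L1 : V1 -> 'I_n) (L2 : V2 -> 'I_n) (pi1 : seq (V1 * V1)) (pi2 : seq (V2 * V2))
  (hL1 : labeling L1) (hL2 : labeling L2)
  (hpi1 : edge_ordering e1 pi1) (hpi2 : edge_ordering e2 pi2)
  (sigma : 'S_n) :
  gmul (gmul (gdelta sigma) (Kelem L1 pi1)) (gdelta (sigma^-1)%g) = Kelem L2 pi2 ->
  graph_iso e1 e2.
Proof.
move=> H.
case: hL1 => L1i L1K L1iK; case: hL2 => L2i L2K L2iK.
have HK a b : Kelem L2 pi2 (tperm a b) = Kelem L1 pi1 (tperm (sigma a) (sigma b)).
  by rewrite -H gmul_deltar gmul_deltal invgK -tpermJ conjgE.
exists (fun x => L2i ((sigma^-1)%g (L1 x))); split.
  exists (fun y => L1i (sigma (L2 y))) => [x|y]; first by rewrite L2iK permKV L1K.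
  by rewrite L1iK permK L2K.
move=> x y; have [<-|xy] := eqVneq x y; first by rewrite (eirr T1) (eirr T2).
have xy2 : L2i ((sigma^-1)%g (L1 x)) != L2i ((sigma^-1)%g (L1 y)).
  by rewrite (inj_eq (can_inj L2iK)) (inj_eq (@perm_inj _ _)) (inj_eq (can_inj L1K)).
rewrite -(K_nz L2K L2iK T2 hpi2 xy2) -(K_nz L1K L1iK T1 hpi1 xy) !L2iK HK.
by rewrite !permKV.
Qed.
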